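(* The $\ket{2}$-controlled qubit $Z$ gate can be emulated by a two-qutrit circuit of qutrit Clifford gates and $R$ gates with $R$-count $3$; that is, there is such a circuit $W$ containing exactly three $R$ gates with $W\ket{c,t}=\ket{c,t}$ for $c\in\{0,1\}$, $t\in\{0,1\}$, and $W\ket{2,t}=(-1)^t\ket{2,t}$ for $t\in\{0,1\}$.
   Context: A qutrit is $\mathbb{C}^3$ with basis $\ket{0},\ket{1},\ket{2}$; $\omega=e^{2\pi i/3}$. Qutrit Clifford gates are those generated (up to global phase) by $S=\mathrm{diag}(1,1,\omega)$, $H=\frac{1}{\sqrt3}\begin{pmatrix}1&1&1\\1&\omega&\bar\omega\\1&\bar\omega&\omega\end{pmatrix}$ and $\mathrm{CX}:\ket{i,j}\mapsto\ket{i,(i+j)\bmod3}$. The qutrit reflection gate is $R=\mathrm{diag}(1,1,-1)$. The $R$-count of a circuit is its number of $R$ gates. The first qutrit is the control (any of $\ket{0},\ket{1},\ket{2}$) and the second is the target, restricted to $\{\ket{0},\ket{1}\}$. *)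

(* Defs.v *)
From HB Require Import structures.
From mathcomp Require Import all_boot all_order all_algebra all_field.
Set Implicit Arguments. Unset Strict Implicit. Unset Printing Implicit Defensive.
Import Order.TTheory GRing.Theory Num.Theory.
Local Open Scope ring_scope.

Definition qutrit := 'I_3.
(* computational basis of two qutrits: (control, target) *)
Definition idx2 := (qutrit * qutrit)%type.

(* omega = e^{2 pi i/3} *)
Definition omega : algC := (-1 + 'i * sqrtC 3) / 2.

Definition Sg : 'M[algC]_3 := \matrix_(i, j) (if (i == j) then (if (i : nat) == 2%N then omega else 1) else 0).
Definition Hg : 'M[algC]_3 := \matrix_(i, j) (omega ^+ ((i : nat) * j) / sqrtC 3).
Definition Rg : 'M[algC]_3 := \matrix_(i, j) (if (i == j) then (if (i : nat) == 2%N then -1 else 1) else 0).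

(* two-qutrit operators as functions (row index, column index) *)
Definition op2 := idx2 -> idx2 -> algC.
Definition op_id : op2 := fun x y => (x == y)%:R.
Definition op_mul (A B : op2) : op2 := fun x y => \sum_(z : idx2) A x z * B z y.

Definition on_q (q : bool) (U : 'M[algC]_3) : op2 := fun x y =>
  if ~~ q then U x.1 y.1 * (x.2 == y.2)%:R else U x.2 y.2 * (x.1 == y.1)%:R.

(* CX with control qutrit q and target the other: |i,j> |-> |i, i+j mod 3> *)
Definition cx (q : bool) : op2 := fun x y =>
  if ~~ q then ((x.1 == y.1) && ((x.2 : nat) == (y.1 + y.2) %% 3)%N)%:R
  else ((x.2 == y.2) && ((x.1 : nat) == (y.2 + y.1) %% 3)%N)%:R.

(* gates: qubit index false = first (control) qutrit, true = second *)
Inductive gate := GS of bool | GH of bool | GCX of bool | GR of bool.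

Definition gate_op (g : gate) : op2 :=
  match g with
  | GS q => on_q q Sg
  | GH q => on_q q Hg
  | GCX q => cx q
  | GR q => on_q q Rg
  end.

Definition is_R (g : gate) : bool := if g is GR _ then true else false.

(* circuit: list of gates, the head is applied first *)
Fixpoint circ_op (gs : seq gate) : op2 :=
  match gs with
  | [::] => op_id
  | g :: gs' => op_mul (circ_op gs') (gate_op g)
  end.

Definition R_count (gs : seq gate) : nat := count is_R gs.

Definition ket (x : idx2) : idx2 -> algC := fun y => (y == x)%:R.
Definition apply_op (A : op2) (v : idx2 -> algC) : idx2 -> algC :=
  fun x => \sum_(y : idx2) A x y * v y.

(* Main.v *)
Require Import Defs.
From mathcomp Require Import all_boot all_order all_algebra all_field.
Import Order.TTheory GRing.Theory Num.Theory.
Local Open Scope ring_scope.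

Definition add3 (a b : qutrit) : qutrit := Ordinal (ltn_pmod (a + b)%N (isT : (0 < 3)%N)).

Definition gperm (g : gate) (x : idx2) : idx2 :=
  match g with
  | GCX false => (x.1, add3 x.1 x.2)
  | GCX true => (add3 x.2 x.1, x.2)
  | _ => x
  end.

Definition gsign (g : gate) (x : idx2) : bool :=
  match g with
  | GR false => (x.1 : nat) == 2%N
  | GR true => (x.2 : nat) == 2%N
  | _ => false
  end.

Definition mono (g : gate) : bool :=
  match g with GCX _ | GR _ => true | _ => false end.

Lemma gate_mono g z x : mono g ->
  gate_op g z x = (z == gperm g x)%:R * (-1) ^+ gsign g x.
Proof.
case: z x => z1 z2 [x1 x2].
case: g => // -[] _ /=; rewrite /cx /on_q /Rg /= ?mxE /= ?xpair_eqE ?expr0 ?mulr1.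
- by rewrite andbC.
- by [].
- case: (z2 =P x2) => [->|_]; last by rewrite andbF !mul0r.
  by rewrite ?eqxx ?andbT; case: (z1 == x1); case: (_ == 2%N); rewrite /= ?mulr1 ?mul1r ?mulr0 ?mul0r ?expr1 ?expr0.
- case: (z1 =P x1) => [->|_]; last by rewrite andFb !mul0r.
  by rewrite ?eqxx ?andTb; case: (z2 == x2); case: (_ == 2%N); rewrite /= ?mulr1 ?mul1r ?mulr0 ?mul0r ?expr1 ?expr0.
Qed.

Lemma op_mul_mono A g y x : mono g ->
  op_mul A (gate_op g) y x = A y (gperm g x) * (-1) ^+ gsign g x.
Proof.
move=> Hg; rewrite /op_mul (bigD1 (gperm g x)) //= big1 ?addr0.
  by rewrite gate_mono // eqxx mul1r.
by move=> w /negbTE Hw; rewrite gate_mono // Hw mul0r mulr0.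
Qed.

Fixpoint cperm (gs : seq gate) (x : idx2) : idx2 :=
  if gs is g :: gs' then cperm gs' (gperm g x) else x.
Fixpoint csign (gs : seq gate) (x : idx2) : bool :=
  if gs is g :: gs' then gsign g x (+) csign gs' (gperm g x) else false.

Lemma circ_mono gs y x : all mono gs ->
  circ_op gs y x = (y == cperm gs x)%:R * (-1) ^+ csign gs x.
Proof.
elim: gs x => [|g gs IH] x /=; first by rewrite expr0 mulr1.
case/andP=> Hg Hgs; rewrite op_mul_mono // IH // signr_addb.
by rewrite -mulrA [X in _ * X]mulrC.
Qed.

Definition W : seq gate :=
  [:: GCX false; GCX true; GCX false; GR true; GCX false; GCX true;
      GCX false; GR false; GCX true; GR false; GCX true].

Lemma W_ok (c t : qutrit) : (t < 2)%N ->
  cperm W (c, t) = (c, t) /\ csign W (c, t) = ((c : nat) == 2%N) && ((t : nat) == 1%N).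
Proof.
case: c => [[|[|[|c]]] Hc] //; case: t => [[|[|t]] Ht] //= _;
  split; (apply/eqP; vm_compute; reflexivity) || vm_compute; reflexivity.
Qed.

Theorem mainTheorem5 :
  exists (gs : seq gate) (z : algC),
    `|z| = 1 /\ R_count gs = 3%N /\
    forall (c t : qutrit), (t < 2)%N ->
      forall y : idx2,
        z * apply_op (circ_op gs) (ket (c, t)) y =
        (if (c : nat) == 2%N then (-1) ^+ t else 1) * ket (c, t) y.
Proof.
exists W, 1; split; first by rewrite normr1.
split; first by [].
move=> c t Ht y; rewrite mul1r /apply_op /ket (bigD1 (c, t)) // big1 ?addr0; last first.
  by move=> w /negbTE Hw; rewrite Hw mulr0.
rewrite /= eqxx mulr1 -[op_mul _ _]/(circ_op W) circ_mono //; have [-> ->] := @W_ok c t Ht.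
rewrite addr0 mulrC; case: ((c : nat) == 2%N) => /=; last by rewrite expr0.
by case: t Ht => [[|[|t]] Ht].
Qed.
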